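(* Every hypergraph in $\mathcal L$ is an atomic Maker-Breaker critical hypergraph.
   Context: A hypergraph $\mathcal H=(V,E)$ has finite vertex set $V$ and $E\subseteq 2^V\setminus\{\emptyset\}$. In the Maker-Breaker game on $\mathcal H$, Maker and Breaker alternately claim unclaimed vertices, Maker first, until all are claimed; Maker wins if he claims all vertices of some edge, Breaker otherwise. $\mathcal H$ is Maker-Breaker critical if Maker wins on $\mathcal H$ but Breaker wins on $(V,E\setminus\{e\})$ for every $e\in E$; it is atomic Maker-Breaker critical if moreover it has no isolated vertices. $\mathcal H^1$ is the hypergraph with one vertex $v$ and the single edge $\{v\}$. For vertex-disjoint hypergraphs $\mathcal H_1,\mathcal H_2$ with edges $e_1\in E(\mathcal H_1)$, $e_2\in E(\mathcal H_2)$, the hypergraph $(\mathcal H_1,e_1)+(\mathcal H_2,e_2)$ has vertex set $V(\mathcal H_1)\cup V(\mathcal H_2)\cup\{z\}$ with $z$ a new vertex, and edge set $\big(E(\mathcal H_1)\cup E(\mathcal H_2)\cup\{e_1\cup\{z\},e_2\cup\{z\}\}\big)\setminus\{e_1,e_2\}$. $\mathcal L$ is the smallest family with $\mathcal H^1\in\mathcal L$ and closed under this operation: if $\mathcal H_1,\mathcal H_2\in\mathcal L$ (vertex-disjoint copies) and $e_i\in E(\mathcal H_i)$ are arbitrary, then $(\mathcal H_1,e_1)+(\mathcal H_2,e_2)\in\mathcal L$. *)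

(* Defs.v *)
From mathcomp Require Import all_boot.
From mathcomp Require Import finmap.
Set Implicit Arguments. Unset Strict Implicit. Unset Printing Implicit Defensive.
Local Open Scope fset_scope.

Definition hypergraph (V : {fset nat}) (E : {fset {fset nat}}) : Prop :=
  forall e, e \in E -> (e `<=` V) /\ e != fset0.

(* State: M = vertices claimed by Maker, U = unclaimed
   vertices ([n] is the fuel, equal to #|U| when started properly; Breaker's
   set plays no role in the outcome).  [turn = true] means Maker to move. *)
Fixpoint mwin (E : {fset {fset nat}}) (n : nat) (turn : bool)
    (M U : {fset nat}) : Prop :=
  match n with
  | 0 => exists2 e, e \in E & e `<=` M
  | n'.+1 =>
      if turn then exists2 v, v \in U & mwin E n' false (v |` M) (U `\ v)
      else forall v, v \in U -> mwin E n' true M (U `\ v)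
  end.

Definition maker_wins (V : {fset nat}) (E : {fset {fset nat}}) : Prop :=
  mwin E #|` V| true fset0 V.

Definition MB_critical (V : {fset nat}) (E : {fset {fset nat}}) : Prop :=
  maker_wins V E /\ (forall e, e \in E -> ~ maker_wins V (E `\ e)).

Definition no_isolated (V : {fset nat}) (E : {fset {fset nat}}) : Prop :=
  forall v, v \in V -> exists2 e, e \in E & v \in e.

Definition atomic_MB_critical (V : {fset nat}) (E : {fset {fset nat}}) : Prop :=
  MB_critical V E /\ no_isolated V E.

Definition hg_sum_V (V1 V2 : {fset nat}) (z : nat) : {fset nat} :=
  V1 `|` V2 `|` [fset z].

Definition hg_sum_E (E1 E2 : {fset {fset nat}}) (e1 e2 : {fset nat}) (z : nat)
  : {fset {fset nat}} :=
  (E1 `|` E2 `|` [fset (e1 `|` [fset z]); (e2 `|` [fset z])]) `\` [fset e1; e2].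

Inductive in_L : {fset nat} -> {fset {fset nat}} -> Prop :=
  | L_base (v : nat) : in_L [fset v] [fset [fset v]]
  | L_sum (V1 V2 : {fset nat}) (E1 E2 : {fset {fset nat}})
          (e1 e2 : {fset nat}) (z : nat) :
      in_L V1 E1 -> in_L V2 E2 ->
      V1 `&` V2 = fset0 -> z \notin V1 -> z \notin V2 ->
      e1 \in E1 -> e2 \in E2 ->
      in_L (hg_sum_V V1 V2 z) (hg_sum_E E1 E2 e1 e2 z).

(* Main.v *)
Require Import Defs.
From mathcomp Require Import all_boot.
From mathcomp Require Import finmap.
Set Implicit Arguments. Unset Strict Implicit. Unset Printing Implicit Defensive.
Local Open Scope fset_scope.

Lemma card_D1 (U : {fset nat}) v n : #|` U| = n.+1 -> v \in U -> #|` U `\ v| = n.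
Proof. by move=> H Hv; move: H; rewrite (cardfsD1 v) Hv => -[]. Qed.

Lemma inL_sub V E : in_L V E -> forall e, e \in E -> e `<=` V.
Proof.
elim=> [v|V1 V2 E1 E2 e1 e2 z _ IH1 _ IH2 _ _ _ He1 He2] e.
  by rewrite inE => /eqP ->.
rewrite /hg_sum_E /hg_sum_V !inE => /andP[_ /orP[/orP[H|H]|/orP[/eqP->|/eqP->]]];
  apply/fsubsetP=> x; rewrite !inE.
- by move/(fsubsetP (IH1 _ H)) ->.
- by move/(fsubsetP (IH2 _ H)) ->; rewrite orbT.
- by case/orP=> [/(fsubsetP (IH1 _ He1)) -> | ->]; rewrite ?orbT.
- by case/orP=> [/(fsubsetP (IH2 _ He2)) -> | ->]; rewrite ?orbT.
Qed.

Lemma inL_ne V E : in_L V E -> exists v, v \in V.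
Proof.
elim=> [v|V1 V2 E1 E2 e1 e2 z _ _ _ _ _ _ _ _ _]; first by exists v; rewrite inE.
by exists z; rewrite !inE eqxx orbT.
Qed.

Lemma lift_mem V1 V2 E1 E2 e1 e2 z f :
  in_L V1 E1 -> in_L V2 E2 -> z \notin V1 -> z \notin V2 -> e1 \in E1 -> e2 \in E2 ->
  f \in E1 `|` E2 ->
  exists2 h, h \in hg_sum_E E1 E2 e1 e2 z & f `<=` h /\ h `<=` f `|` [fset z].
Proof.
move=> H1 H2 z1 z2 He1 He2 Hf.
have ze1 : z \notin e1 by apply: contra z1; apply: (fsubsetP (inL_sub H1 He1)).
have ze2 : z \notin e2 by apply: contra z2; apply: (fsubsetP (inL_sub H2 He2)).
have ne : forall e, z \notin e -> e `|` [fset z] != e.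
  by move=> e ze; apply: contraNneq ze => <-; rewrite !inE eqxx orbT.
have ne2 : forall e e', z \notin e' -> e `|` [fset z] != e'.
  by move=> e e' ze; apply: contraNneq ze => <-; rewrite !inE eqxx orbT.
case: (boolP (f \in [fset e1; e2])) => Hfe.
  exists (f `|` [fset z]); last by split; [exact: fsubsetUl | exact: fsubset_refl].
  move: Hfe; rewrite /hg_sum_E !inE => /orP[]/eqP->;
    rewrite (negbTE (ne2 _ _ ze1)) (negbTE (ne2 _ _ ze2)) /= eqxx !orbT //.
exists f; last by split; [exact: fsubset_refl | exact: fsubsetUl].
by rewrite /hg_sum_E in_fsetD Hfe in_fsetU Hf.
Qed.

Lemma won (E : {fset {fset nat}}) n : forall turn (M U : {fset nat}), #|` U| = n -> (exists2 g, g \in E & g `<=` M) ->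
  mwin E n turn M U.
Proof.
elim: n => [|n IH] turn M U HU [g Hg HgM] //=; first by exists g.
case: turn.
  have : U != fset0 by rewrite -cardfs_eq0 HU.
  case/fset0Pn=> v Hv; exists v => //; apply: IH; first exact: card_D1 HU Hv.
  by exists g => //; apply: fsubset_trans HgM (fsubsetUr _ _).
move=> v Hv; apply: IH; first exact: card_D1 HU Hv.
by exists g.
Qed.

Definition cover (E F : {fset {fset nat}}) (M : {fset nat}) :=
  forall f, f \in F -> exists2 g, g \in E & g `<=` f `|` M.

Lemma maker_gen (E : {fset {fset nat}}) n :
  (forall (M U W : {fset nat}) F, #|` U| = n -> in_L W F -> W `<=` U -> cover E F M ->
     mwin E n true M U) /\
  (forall (M U W1 : {fset nat}) F1 (W2 : {fset nat}) F2, #|` U| = n -> in_L W1 F1 -> in_L W2 F2 ->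
     W1 `<=` U -> W2 `<=` U -> W1 `&` W2 = fset0 ->
     cover E F1 M -> cover E F2 M -> mwin E n false M U).
Proof.
elim: n => [|n [IHt IHf]].
  split.
    move=> M U W F HU HL HW _; have [v Hv] := inL_ne HL.
    by move: (fsubsetP HW v Hv); rewrite (cardfs0_eq HU) inE.
  move=> M U W1 F1 W2 F2 HU HL _ HW _ _ _ _; have [v Hv] := inL_ne HL.
  by move: (fsubsetP HW v Hv); rewrite (cardfs0_eq HU) inE.
split.
  move=> M U W F HU HL HW HC; case: HL HW HC.
    move=> v HW HC; have Hv : v \in U by apply: (fsubsetP HW); rewrite inE.
    exists v => //; apply: won; first exact: card_D1 HU Hv.
    have [g Hg Hgs] := HC [fset v] (fset11 _).
    exists g => //; apply: fsubset_trans Hgs _.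
  move=> V1 V2 E1 E2 e1 e2 z H1 H2 Hd z1 z2 He1 He2 HW HC.
  have Hz : z \in U by apply: (fsubsetP HW); rewrite /hg_sum_V !inE eqxx orbT.
  exists z => //; apply: (IHf _ _ V1 E1 V2 E2) => //.
  - exact: card_D1 HU Hz.
  - apply/fsubsetP=> x Hx; rewrite inE (fsubsetP HW) ?andbT.
      by rewrite inE; apply/eqP => Exz; move: z1; rewrite -Exz Hx.
    by rewrite /hg_sum_V !inE Hx.
  - apply/fsubsetP=> x Hx; rewrite inE (fsubsetP HW) ?andbT.
      by rewrite inE; apply/eqP => Exz; move: z2; rewrite -Exz Hx.
    by rewrite /hg_sum_V !inE Hx orbT.
  - move=> f Hf.
    have [h Hh [_ Hhf]] := lift_mem H1 H2 z1 z2 He1 He2 (fsubsetP (fsubsetUl _ _) _ Hf).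
    have [g Hg Hgs] := HC h Hh; exists g => //.
    apply: fsubset_trans Hgs _; apply/fsubsetP=> x; rewrite !inE.
    by case/orP=> [/(fsubsetP Hhf)|->]; rewrite ?inE ?orbT // => /orP[->|->]; rewrite ?orbT.
  - move=> f Hf.
    have [h Hh [_ Hhf]] := lift_mem H1 H2 z1 z2 He1 He2 (fsubsetP (fsubsetUr _ _) _ Hf).
    have [g Hg Hgs] := HC h Hh; exists g => //.
    apply: fsubset_trans Hgs _; apply/fsubsetP=> x; rewrite !inE.
    by case/orP=> [/(fsubsetP Hhf)|->]; rewrite ?inE ?orbT // => /orP[->|->]; rewrite ?orbT.
move=> M U W1 F1 W2 F2 HU H1 H2 HW1 HW2 Hd HC1 HC2 w Hw.
have HU' := card_D1 HU Hw.
case: (boolP (w \in W1)) => Hw1.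
  have Hw2 : w \notin W2.
    by apply: contraT; rewrite negbK => Hw2; move: (in_fsetI W1 W2 w); rewrite Hd Hw1 Hw2 inE.
  apply: (IHt _ _ W2 F2) => //; apply/fsubsetP=> x Hx; rewrite inE (fsubsetP HW2) // andbT.
  by rewrite inE; apply/eqP => Exw; move: Hw2; rewrite -Exw Hx.
apply: (IHt _ _ W1 F1) => //; apply/fsubsetP=> x Hx; rewrite inE (fsubsetP HW1) // andbT.
by rewrite inE; apply/eqP => Exw; move: Hw1; rewrite -Exw Hx.
Qed.

Lemma maker_L V E : in_L V E -> maker_wins V E.
Proof.
move=> HL; apply: ((maker_gen E #|` V|).1 fset0 V V E) => //.
by move=> f Hf; exists f => //; exact: fsubsetUl.
Qed.

Definition binv (E : {fset {fset nat}}) (p : nat -> nat) (M U : {fset nat}) :=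
  forall f, f \in E ->
    (exists x, [/\ x \in f, x \notin M & x \notin U]) \/
    (exists a b, [/\ a \in f, b \in f, a \in U, b \in U & [/\ p a = b, p b = a & a != b]]).

Lemma breaker (E : {fset {fset nat}}) p n : forall M U : {fset nat},
  #|` U| = n -> (forall x, x \in M -> x \notin U) -> binv E p M U ->
  ~ mwin E n true M U.
Proof.
elim/ltn_ind: n => n IH M U HU HMU HI.
case: n IH HU => [|n] IH HU /=.
  case=> g Hg HgM; case: (HI g Hg) => [[x [Hx HxM _]]|[a [b [Ha _ HaU _ _]]]].
    by move: HxM; rewrite (fsubsetP HgM).
  by move: HaU; rewrite (cardfs0_eq HU) inE.
case=> v Hv.
have HU1 := card_D1 HU Hv.
case: n IH HU HU1 => [|n] IH HU HU1 /=.
  case=> g Hg HgM; have E1 := cardfs0_eq HU1.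
  have Uv : forall y, y \in U -> y = v.
    move=> y Hy; apply/eqP; apply: contraT => Hyv.
    by have := in_fsetD1 U v y; rewrite E1 Hy Hyv inE.
  case: (HI g Hg) => [[x [Hx HxM HxU]]|[a [b [_ _ HaU HbU [_ _ Hab]]]]].
    move: (fsubsetP HgM x Hx); rewrite !inE (negbTE HxM) orbF => /eqP Exv.
    by move: HxU; rewrite Exv Hv.
  by move: Hab; rewrite (Uv _ HaU) (Uv _ HbU) eqxx.
move=> Hw.
have [w0 Hw0] : exists w0, w0 \in U `\ v.
  by apply/fset0Pn; rewrite -cardfs_eq0 HU1.
pose w := if p v \in U `\ v then p v else w0.
have HwU : w \in U `\ v by rewrite /w; case: ifP.
apply: (IH n _ (v |` M) (U `\ v `\ w)) (Hw w HwU) => //.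
- exact: card_D1 HU1 HwU.
- move=> x; rewrite !inE => /orP[/eqP->|/HMU HxU]; first by rewrite eqxx !andbF.
  by rewrite (negbTE HxU) !andbF.
move=> f Hf; case: (HI f Hf) => [[x [Hx HxM HxU]]|[a [b [Ha Hb HaU HbU [Hpa Hpb Hab]]]]].
  left; exists x; split => //; rewrite !inE ?(negbTE HxU) ?andbF //.
  rewrite (negbTE HxM) orbF; apply: contraNneq HxU => ->; exact: Hv.
case: (boolP (w \in [fset a; b])) => Hwab.
  left; exists w; split.
  - by move: Hwab; rewrite !inE => /orP[]/eqP->.
  - rewrite !inE negb_or; apply/andP; split.
      by move: HwU; rewrite !inE => /andP[].
    move: HwU; rewrite !inE => /andP[_ HwU']; apply/negP => HwM.
    by move: (HMU _ HwM); rewrite HwU'.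
  - by rewrite !inE eqxx.
have Hva : v != a.
  apply/negP => /eqP Eva; move: Hwab; rewrite /w Eva Hpa.
  have -> : b \in U `\ a by rewrite !inE HbU eq_sym Hab.
  by rewrite !inE eqxx orbT.
have Hvb : v != b.
  apply/negP => /eqP Evb; move: Hwab; rewrite /w Evb Hpb.
  have -> : a \in U `\ b by rewrite !inE HaU Hab.
  by rewrite !inE eqxx.
right; exists a, b; split => //.
- move: Hwab; rewrite !inE negb_or => /andP[Hwa _].
  by rewrite HaU eq_sym Hwa eq_sym Hva.
- move: Hwab; rewrite !inE negb_or => /andP[_ Hwb].
  by rewrite HbU eq_sym Hwb eq_sym Hvb.
Qed.

Definition pairing (V : {fset nat}) (E : {fset {fset nat}}) (e : {fset nat}) (p : nat -> nat) :=
  (forall f, f \in E -> f != e -> exists a b,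
     [/\ a \in f, b \in f, a \in V, b \in V & [/\ p a = b, p b = a & a != b]]) /\
  exists u, [/\ u \in e, u \in V & p u = u].

Lemma side1 V1 V2 E1 E2 e1 e2 z e :
  in_L V1 E1 -> in_L V2 E2 -> V1 `&` V2 = fset0 -> z \notin V1 -> z \notin V2 ->
  e1 \in E1 -> e2 \in E2 ->
  (forall e, e \in E1 -> exists p, pairing V1 E1 e p) ->
  (forall e, e \in E2 -> exists p, pairing V2 E2 e p) ->
  e \in hg_sum_E E1 E2 e1 e2 z -> (e = e1 `|` [fset z] \/ e \in E1) ->
  exists p, pairing (hg_sum_V V1 V2 z) (hg_sum_E E1 E2 e1 e2 z) e p.
Proof.
move=> H1 H2 Hd z1 z2 He1 He2 IH1 IH2 He Hcase.
have dis : forall x, x \in V1 -> x \in V2 -> False.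
  by move=> x X1 X2; have := in_fsetI V1 V2 x; rewrite Hd X1 X2 inE.
have HeE : e \notin [fset e1; e2] by move: He; rewrite /hg_sum_E in_fsetD => /andP[].
pose e' := if e \in E1 then e else e1.
have He' : e' \in E1 by rewrite /e'; case: ifP.
have Hsub : e' `<=` e.
  rewrite /e'; case: ifP => // HeE1; case: Hcase => [->|]; last by rewrite HeE1.
  exact: fsubsetUl.
have Hne : forall f, f != e1 -> f != e -> f != e'.
  by move=> f; rewrite /e'; case: ifP.
have Hne2 : e1 `|` [fset z] != e -> e1 != e'.
  rewrite /e'; case: ifP => HeE1 Hn.
    by apply: contraNneq HeE => <-; rewrite !inE eqxx.
  by case: Hcase Hn => [->|]; rewrite ?eqxx ?HeE1.
have [p1 [P1 [u1 [Hu1 Hu1V Hpu1]]]] := IH1 e' He'.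
have [p2 [P2 [u2 [Hu2 Hu2V Hpu2]]]] := IH2 e2 He2.
pose p x := if x == z then u2 else if x == u2 then z else if x \in V1 then p1 x else p2 x.
have Q1 : forall x, x \in V1 -> p x = p1 x.
  move=> x Hx; rewrite /p Hx; case: eqP => [Exz|_]; first by move: z1; rewrite -Exz Hx.
  by case: eqP => [Exu|//]; case: (dis x) => //; rewrite Exu.
have Q2 : forall x, x \in V2 -> x != u2 -> p x = p2 x.
  move=> x Hx Hxu; rewrite /p (negbTE Hxu); case: eqP => [Exz|_]; first by move: z2; rewrite -Exz Hx.
  by case: ifP => // Hx1; case: (dis x).
have inV1 : forall x, x \in V1 -> x \in hg_sum_V V1 V2 z by move=> x Hx; rewrite !inE Hx.
have inV2 : forall x, x \in V2 -> x \in hg_sum_V V1 V2 z by move=> x Hx; rewrite !inE Hx orbT.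
have lift1 : forall f g, g `<=` f -> g \in E1 -> g != e' ->
    exists a b, [/\ a \in f, b \in f, a \in hg_sum_V V1 V2 z, b \in hg_sum_V V1 V2 z
                  & [/\ p a = b, p b = a & a != b]].
  move=> f g Hgf Hg Hge; have [a [b [Ha Hb Va Vb [Pa Pb Hab]]]] := P1 g Hg Hge.
  exists a, b; split; rewrite ?inV1 ?(fsubsetP Hgf) //.
  split; [by rewrite (Q1 a Va) | by rewrite (Q1 b Vb) | done].
exists p; split; last first.
  exists u1; split; first exact: (fsubsetP Hsub).
    exact: inV1.
  rewrite Q1 //; exact: Hpu1.
move=> f Hf Hfe; move: Hf; rewrite /hg_sum_E in_fsetD => /andP[Hf12].
have Hfe1 : f != e1 by apply: contraNneq Hf12 => ->; rewrite !inE eqxx.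
have Hfe2 : f != e2 by apply: contraNneq Hf12 => ->; rewrite !inE eqxx orbT.
rewrite !inE => /orP[/orP[Hf|Hf]|/orP[/eqP Ef|/eqP Ef]].
- exact: lift1 (fsubset_refl _) Hf (Hne _ Hfe1 Hfe).
- have [a [b [Ha Hb Va Vb [Pa Pb Hab]]]] := P2 f Hf Hfe2.
  have Hau : a != u2 by apply: contraNneq Hab => Eau; rewrite -Pa Eau Hpu2.
  have Hbu : b != u2 by apply: contraNneq Hab => Ebu; rewrite -Pb Ebu Hpu2.
  exists a, b; split; rewrite ?inV2 //.
  split; [by rewrite (Q2 a Va Hau) | by rewrite (Q2 b Vb Hbu) | done].
- apply: (lift1 f e1); rewrite ?Ef ?fsubsetUl //.
  by apply: Hne2; rewrite -Ef.
- exists u2, z; split.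
  + by rewrite Ef !inE Hu2.
  + by rewrite Ef !inE eqxx orbT.
  + exact: inV2.
  + by rewrite /hg_sum_V !inE eqxx orbT.
  split.
  + by rewrite /p eqxx; case: eqP => // Euz; move: z2; rewrite -Euz Hu2V.
  + by rewrite /p eqxx.
  + by apply: contraNneq z2 => <-.
Qed.

Lemma sumE_C E1 E2 e1 e2 z : hg_sum_E E1 E2 e1 e2 z = hg_sum_E E2 E1 e2 e1 z.
Proof.
apply/fsetP=> x; rewrite /hg_sum_E !inE.
by case: (x == e1); case: (x == e2); case: (x \in E1); case: (x \in E2); case: (x == e1 `|` [fset z]); case: (x == e2 `|` [fset z]).
Qed.

Lemma sumV_C (V1 V2 : {fset nat}) z : hg_sum_V V1 V2 z = hg_sum_V V2 V1 z.
Proof.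
apply/fsetP=> x; rewrite /hg_sum_V !inE.
by case: (x \in V1); case: (x \in V2).
Qed.

Lemma pairing_L V E : in_L V E -> forall e, e \in E -> exists p, pairing V E e p.
Proof.
elim=> [v|V1 V2 E1 E2 e1 e2 z H1 IH1 H2 IH2 Hd z1 z2 He1 He2] e He.
  exists id; split.
    by move=> f Hf; move: He Hf; rewrite !inE => /eqP-> /eqP->; rewrite eqxx.
  by exists v; move: He; rewrite !inE => /eqP->; rewrite !inE eqxx.
have He' := He; move: He'; rewrite {1}/hg_sum_E in_fsetD !inE => /andP[_].
case/orP=> [/orP[HE|HE]|/orP[/eqP HE|/eqP HE]].
- exact: side1 H1 H2 Hd z1 z2 He1 He2 IH1 IH2 He (or_intror HE).
- rewrite sumE_C sumV_C; apply: side1 H2 H1 _ z2 z1 He2 He1 IH2 IH1 _ (or_intror HE).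
    by rewrite fsetIC.
  by rewrite -sumE_C.
- exact: side1 H1 H2 Hd z1 z2 He1 He2 IH1 IH2 He (or_introl HE).
- rewrite sumE_C sumV_C; apply: side1 H2 H1 _ z2 z1 He2 He1 IH2 IH1 _ (or_introl HE).
    by rewrite fsetIC.
  by rewrite -sumE_C.
Qed.

Lemma no_iso_L V E : in_L V E -> no_isolated V E.
Proof.
elim=> [v|V1 V2 E1 E2 e1 e2 z H1 IH1 H2 IH2 Hd z1 z2 He1 He2] x.
  by rewrite inE => /eqP->; exists [fset v]; rewrite inE.
rewrite /hg_sum_V !inE => /orP[/orP[Hx|Hx]|/eqP->].
- have [f Hf Hxf] := IH1 x Hx.
  have [h Hh [Hhf _]] := lift_mem H1 H2 z1 z2 He1 He2 (fsubsetP (fsubsetUl _ E2) _ Hf).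
  by exists h => //; apply: (fsubsetP Hhf).
- have [f Hf Hxf] := IH2 x Hx.
  have [h Hh [Hhf _]] := lift_mem H1 H2 z1 z2 He1 He2 (fsubsetP (fsubsetUr E1 _) _ Hf).
  by exists h => //; apply: (fsubsetP Hhf).
-   exists (e1 `|` [fset z]); last by rewrite !inE eqxx orbT.
  have ze1 : z \notin e1 by apply: contra z1; apply: (fsubsetP (inL_sub H1 He1)).
  have ze2 : z \notin e2 by apply: contra z2; apply: (fsubsetP (inL_sub H2 He2)).
  rewrite /hg_sum_E !inE eqxx !orbT andbT negb_or; apply/andP; split.
    by apply: contraNneq ze1 => <-; rewrite !inE eqxx orbT.
  by apply: contraNneq ze2 => <-; rewrite !inE eqxx orbT.
Qed.

Theorem proposition6p8 (V : {fset nat}) (E : {fset {fset nat}}) :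
  in_L V E -> atomic_MB_critical V E.
Proof.
move=> HL; split; last exact: no_iso_L.
split; first exact: maker_L.
move=> e He Hw; have [p [Pp _]] := pairing_L HL He.
apply: (breaker (p := p) (n := #|` V|) (M := fset0) (U := V)) Hw => //.
move=> f; rewrite in_fsetD1 => /andP[Hfe Hf]; right.
have [a [b [Ha Hb Va Vb P]]] := Pp f Hf Hfe; by exists a, b.
Qed.
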